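(* Let $\eta\in\partial A_*$ and let $z\in\Lambda$ be such that $c_z(\eta)=1$ and $\eta^z\notin A_*$. Let $I=[a,b]\subseteq\{0,1,\dots,L\}$ be an integer interval containing $z$ and $z-1$, let $\ell=b-a$, $I_-=(a-\ell,a)\cap\{0,\dots,L\}$, $I_+=(b,b+\ell]\cap\{0,\dots,L\}$. Then either $I=\{0,1,\dots,L\}$, or $\eta$ (with the convention $\eta_0=0$) has at least one zero in $I_-\cup I_+$.
   Context: Fix $q\in(0,1/2)$, $\Lambda=\{1,\dots,L\}$, $\Omega_\Lambda=\{0,1\}^\Lambda$. East constraints: $c_1\equiv1$, $c_x(\sigma)=1-\sigma_{x-1}$ for $x\ge2$; $\eta^x$ is $\eta$ with the spin at $x$ flipped. Deterministic dynamics: set $\eta_0:=0$. The gap at $x$ is $g_x(\eta)=\min\{d>0:\eta_{x-d}=0\}$. For $(d,x)\in\{1,\dots,L\}^2$, $\phi_{d,x}(\eta)$ sets $\eta_x=1$ if $\eta_x=0$ and $g_x(\eta)=d$, otherwise leaves $\eta$ unchanged. Order $\{1,\dots,L\}^2$ by $(d_1,x_1)\prec(d_2,x_2)$ iff $d_1<d_2$, or $d_1=d_2$ and $x_1>x_2$; list it as $\alpha_1\prec\dots\prec\alpha_{L^2}$, set $\eta[0]=\eta$, $\eta[k]=\phi_{\alpha_k}(\eta[k-1])$, and write $\Phi(\eta;d,x)=\eta[k]$ when $\alpha_k=(d,x)$. $A_*=\{\eta:\Phi(\eta;L-1,1)=\mathbb 10\}$, with $\mathbb 10$ having $\sigma_x=1$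 for $x<L$, $\sigma_L=0$. $\partial A_*=\{\eta\in A_*:\exists\,x\in\Lambda$ with $c_x(\eta)=1$ and $\eta^x\notin A_*\}$. *)

(* Defs.v *)
From mathcomp Require Import all_boot.
Set Implicit Arguments. Unset Strict Implicit. Unset Printing Implicit Defensive.

(* A configuration on Lambda = {1..L} is represented by eta : nat -> bool
   (true = 1, false = 0); only the values at 1..L are ever read.
   The convention eta_0 := 0 is imposed by [ext]. *)
Definition config := nat -> bool.

Definition ext (eta : config) : config :=
  fun x => if x == 0 then false else eta x.

Definition flip (eta : config) (x : nat) : config :=
  fun y => if y == x then ~~ eta y else eta y.

Definition cE (x : nat) (eta : config) : bool :=
  (x == 1) || ~~ eta (x - 1).

(* gap g_x(eta) = min {d > 0 : eta_{x-d} = 0} (with eta_0 = 0), for x >= 1: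
   the first d in 1..x with ext eta (x - d) = false. *)
Definition gap (eta : config) (x : nat) : nat :=
  (find (fun i => ~~ ext eta (x - i.+1)) (iota 0 x)).+1.

Definition phi (d x : nat) (eta : config) : config :=
  if (~~ ext eta x) && (gap eta x == d)
  then (fun y => if y == x then true else eta y)
  else eta.

Definition alphas (L : nat) : seq (nat * nat) :=
  [seq (d, x) | d <- iota 1 L, x <- rev (iota 1 L)].

(* Phi(eta; d, x) = eta[k] where alpha_k = (d, x) *)
Definition PhiAt (L : nat) (eta : config) (d x : nat) : config :=
  foldl (fun e a => phi a.1 a.2 e) eta
        (take (index (d, x) (alphas L)).+1 (alphas L)).

Definition inAstar (L : nat) (eta : config) : Prop :=
  forall y, 1 <= y <= L -> PhiAt L eta (L - 1) 1 y = (y < L).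

Definition inBoundary (L : nat) (eta : config) : Prop :=
  inAstar L eta /\
  exists x, 1 <= x <= L /\ cE x eta /\ ~ inAstar L (flip eta x).

(* Main.v *)
Require Import Defs.
From mathcomp Require Import all_boot zify.
From Stdlib Require Import Classical.
Set Implicit Arguments. Unset Strict Implicit.


Fixpoint Sr (e : config) (r u : nat) : bool :=
  match r with
  | 0 => ~~ ext e u
  | r'.+1 => Sr e r' u && ((u == 0) || (r'.+1 <= u) && ~~ Sr e r' (u - r'.+1))
  end.

Lemma Sr0 e r : Sr e r 0.
Proof. by elim: r => //= r ->. Qed.

Lemma SrS e r u : Sr e r.+1 u -> Sr e r u.
Proof. by move=> /= /andP[]. Qed.

Lemma Sr_le e r s u : r <= s -> Sr e s u -> Sr e r u.
Proof.
move=> /subnK <-; elim: (s - r) => // k IH H; apply: IH; exact: SrS.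
Qed.

Lemma Sr_zero e r u : Sr e r u -> ~~ ext e u.
Proof. move=> H; exact: (Sr_le (leq0n r) H). Qed.

Lemma Sr_inv e r p u : Sr e r p -> Sr e r u -> u < p -> u + r < p.
Proof.
elim: r p u => [|r IH] p u; first by rewrite addn0.
move=> Hp Hu Hup.
have := IH _ _ (SrS Hp) (SrS Hu) Hup.
rewrite leq_eqVlt => /orP[/eqP E|]; last by rewrite addnS.
move: Hp => /= /andP[_]; have -> : (p == 0) = false by apply/eqP; lia.
have -> : p - r.+1 = u by lia.
by rewrite (SrS Hu) andbF.
Qed.

Lemma Sr_kill e r u : 1 <= u <= r -> Sr e r u = false.
Proof.
case/andP=> H1 H2; apply/negP => H.
have := Sr_le H2 H; case: u H1 {H H2} => // u _ /= /andP[_].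
by rewrite subnn Sr0 andbF.
Qed.

Lemma Sr_ext e e' L : (forall u, u <= L -> ext e u = ext e' u) ->
  forall r u, u <= L -> Sr e r u = Sr e' r u.
Proof.
move=> H; elim=> [|r IH] u Hu /=; first by rewrite H.
rewrite IH //; case: (u == 0) => //; case: (r.+1 <= u) => //=.
by rewrite IH //; lia.
Qed.


Lemma gap_eq e eta d x : 1 <= x ->
  (forall u, u < x -> ~~ ext e u = Sr eta d u) -> Sr eta d x ->
  (gap e x == d.+1) = (d.+1 <= x) && Sr eta d (x - d.+1).
Proof.
move=> Hx He Hsx; rewrite /gap eqSS.
set P := (fun i => ~~ ext e (x - i.+1)).
have Pi : forall i, i < x -> P i = Sr eta d (x - i.+1).
  by move=> i Hi; rewrite /P He //; lia.
have Hnth : forall i, i < x -> nth 0 (iota 0 x) i = i.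
  by move=> i Hi; rewrite nth_iota.
have Hlt : find P (iota 0 x) < x.
  have : has P (iota 0 x).
    apply/hasP; exists x.-1; first by rewrite mem_iota; lia.
    by rewrite /P /ext; have -> : x - x.-1.+1 = 0 by lia.
  by rewrite has_find size_iota.
have Hsmall : forall i, i < d -> i < x -> P i = false.
  move=> i Hid Hix; rewrite Pi //; apply/negP => H.
  have := Sr_inv Hsx H; lia.
apply/idP/idP.
- move/eqP=> Hf.
  have := nth_find 0 (a := P) (s := iota 0 x); rewrite has_find size_iota => /(_ Hlt).
  rewrite Hf Hnth -?Hf // Pi -?Hf // Hf => ->; rewrite andbT; lia.
- case/andP=> Hdx Hs.
  have Pd : P d by rewrite Pi.
  have Hle : find P (iota 0 x) <= d.
    rewrite leqNgt; apply/negP => Hk.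
    by have := before_find 0 Hk; rewrite Hnth // Pd.
  apply/eqP; apply/eqP; rewrite eqn_leq Hle /= leqNgt; apply/negP => Hk.
  have := nth_find 0 (a := P) (s := iota 0 x); rewrite has_find size_iota => /(_ Hlt).
  by rewrite Hnth // Hsmall.
Qed.


Definition stepf (e : config) (p : nat * nat) := phi p.1 p.2 e.

Lemma ext_phi_other d x e y : y != x -> ext (phi d x e) y = ext e y.
Proof.
move=> Hy; rewrite /ext /phi; case: (y == 0) => //.
by case: (_ && _) => //; rewrite (negbTE Hy).
Qed.

Lemma round_aux eta L d n : n <= L -> forall e,
  (forall u, u <= n -> ~~ ext e u = Sr eta d u) ->
  (forall u, n < u <= L -> ~~ ext e u = Sr eta d.+1 u) ->
  forall u, u <= L ->
  ~~ ext (foldl stepf e [seq (d.+1, x) | x <- rev (iota 1 n)]) u = Sr eta d.+1 u.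
Proof.
elim: n => [|n IH] Hn e H1 H2 u Hu.
- case: u Hu => [|u] Hu /=; first by rewrite Sr0 /ext.
  by apply: H2.
- rewrite (_ : iota 1 n.+1 = rcons (iota 1 n) n.+1); last by rewrite -cats1 -(iotaD 1 n 1) addn1.
  rewrite rev_rcons /=.
  apply: IH => //; first by lia.
  + move=> v Hv; rewrite /stepf ext_phi_other /=; last by apply/eqP; lia.
    apply: H1; lia.
  + move=> v /andP[Hv1 Hv2].
    case: (eqVneq v n.+1) => [->|Hne]; last first.
      rewrite /stepf ext_phi_other /=; last by apply/eqP; lia.
      apply: H2; lia.
    have Hz := H1 n.+1 (leqnn _).
    rewrite /stepf /= /phi.
    have Hless : forall w, w < n.+1 -> ~~ ext e w = Sr eta d w.
      move=> w Hw; apply: H1; lia.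
    case Hs: (Sr eta d n.+1); rewrite Hs /= in Hz.
    * rewrite Hz /= (gap_eq (eta:=eta)) //.
      case: ifP => Hc.
      by move/andP: Hc => [-> ->]; rewrite /ext eqxx.
      have Hd : d < n.+1.
        rewrite ltnNge; apply/negP => Hdn.
        by rewrite Sr_kill in Hs; lia.
      by rewrite Hz Hd /=; move: Hc; rewrite Hd /= => /negbT.
    * by rewrite Hz /=.
Qed.


Definition RR L k := [seq (d, x) | d <- iota 1 k, x <- rev (iota 1 L)].

Lemma RR_S L k : RR L k.+1 = RR L k ++ [seq (k.+1, x) | x <- rev (iota 1 L)].
Proof.
rewrite /RR; set t := rev (iota 1 L).
rewrite (_ : iota 1 k.+1 = rcons (iota 1 k) k.+1); last by rewrite -cats1 -(iotaD 1 k 1) addn1.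
by rewrite map_rcons flatten_rcons.
Qed.

Lemma fold_rounds eta L k u : u <= L ->
  ~~ ext (foldl stepf eta (RR L k)) u = Sr eta k u.
Proof.
elim: k u => [|k IH] u Hu; first by [].
rewrite RR_S foldl_cat.
apply: (@round_aux eta L k L (leqnn L)) => //.
by move=> v; lia.
Qed.

Lemma take_alphas n :
  take (index (n.+1, 1) (alphas n.+2)).+1 (alphas n.+2) = RR n.+2 n.+1.
Proof.
set P := RR n.+2 n ++ [seq (n.+1, x) | x <- rev (iota 2 n.+1)].
have HR : RR n.+2 n.+1 = rcons P (n.+1, 1).
  rewrite RR_S /P -cats1 -catA; congr (_ ++ _).
  by rewrite (_ : iota 1 n.+2 = 1 :: iota 2 n.+1) // rev_cons map_rcons cats1.
have HA : alphas n.+2 = RR n.+2 n.+1 ++ [seq (n.+2, x) | x <- rev (iota 1 n.+2)].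
  exact: (RR_S n.+2 n.+1).
have Hnot : (n.+1, 1) \notin P.
  rewrite mem_cat negb_or; apply/andP; split.
  - apply/negP => /allpairsP [[d x] [/= Hd _ [E1 E2]]].
    by move: Hd; rewrite mem_iota -E1; lia.
  - apply/negP => /mapP [x Hx [E]].
    by move: Hx; rewrite mem_rev mem_iota -E.
rewrite HA HR -cats1 -catA cat1s index_cat (negbTE Hnot) /= eqxx addn0.
by rewrite take_cat ltnNge leqnSn /= subSnn /= take0.
Qed.

Lemma PhiAt_Sr e n y : 1 <= y <= n.+2 ->
  PhiAt n.+2 e (n.+2 - 1) 1 y = ~~ Sr e n.+1 y.
Proof.
move=> /andP[H1 H2].
rewrite /PhiAt (_ : n.+2 - 1 = n.+1); last by rewrite subn1.
rewrite take_alphas -(@fold_rounds e n.+2 n.+1 y H2) negbK.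
by rewrite /ext; case: y H1 H2.
Qed.


Lemma m_survive th a l m : a <= m -> ~~ ext th m ->
  (forall y, y < m -> a < y + l -> ext th y) ->
  forall r, r < l -> Sr th r m.
Proof.
move=> Ham Hm Hy; elim=> [|r IH] Hr //=.
rewrite IH; last by lia.
case: (eqVneq m 0) => //= Hm0.
have Hrm : r < m.
  rewrite ltnNge; apply/negP => Hmr.
  have H0 := Hy 0; rewrite /ext /= in H0.
  suff : false by []. apply: H0; lia.
rewrite Hrm /=; apply/negP => /Sr_zero; rewrite Hy //; lia.
Qed.

Lemma m_kill th a b m : a <= m -> 1 <= b - a -> Sr th (b - a).-1 m ->
  forall p, m < p <= b -> Sr th (b - a) p = false.
Proof.
move=> Ham Hl; case Hk: (b - a) Hl => [|k] // _ /= Hm p /andP [Hp1 Hp2] /=.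
apply/negP => /andP [Hp H].
have Hi := Sr_inv Hp Hm Hp1.
have E : p - k.+1 = m by lia.
by move: H; rewrite E Hm andbF orbF => /eqP; lia.
Qed.

Lemma eq_from e e' L r0 : (forall u, u <= L -> Sr e r0 u = Sr e' r0 u) ->
  forall k u, u <= L -> Sr e (r0 + k) u = Sr e' (r0 + k) u.
Proof.
move=> H; elim=> [|k IH] u Hu; first by rewrite addn0 H.
rewrite addnS /= IH //; case: (u == 0) => //; case: (_ <= u) => //=.
by rewrite IH //; lia.
Qed.

Lemma ext_flip e z y : y != z -> ext (flip e z) y = ext e y.
Proof. by move=> H; rewrite /ext /flip (negbTE H). Qed.


Lemma diff_out eta z b l L : z <= b ->
  (forall y, y <= L -> b < y <= b + l -> ext eta y) ->
  forall r, r <= l -> forall u, u <= L -> (u < z) || (b < u) ->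
  Sr eta r u = Sr (flip eta z) r u.
Proof.
move=> Hzb Hr; elim=> [|r IH] Hrl u Hu Hout /=.
  by rewrite ext_flip //; apply/eqP; lia.
rewrite -IH //; last by lia.
case: (u == 0) => //; case Hru: (r.+1 <= u) => //=.
case Ho: ((u - r.+1 < z) || (b < u - r.+1)).
  by rewrite -IH //; lia.
have Hbu : b < u by lia.
have Hz : Sr eta r u = false.
  apply/negP => /Sr_zero; rewrite Hr //; lia.
by rewrite Hz.
Qed.

Unset Implicit Arguments.
Theorem mainTheorem15 (L : nat) (eta : config) (z a b : nat) :
  inBoundary L eta ->
  1 <= z <= L -> cE z eta -> ~ inAstar L (flip eta z) ->
  a <= b -> b <= L -> a <= z - 1 -> z <= b ->
  (a = 0 /\ b = L) \/
  exists y, y <= L /\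
    ((a < y + (b - a) /\ y < a) \/ (b < y /\ y <= b + (b - a))) /\
    ext eta y = false.
Proof.
move=> [HA _] Hz HcE HnA Hab HbL Haz Hzb.
case: (boolP ((a == 0) && (b == L))) => [/andP[/eqP -> /eqP ->]|Hnw]; first by left.
right; apply: NNPP => Hno.
set l := b - a.
have NoZ : forall y, y <= L -> ((a < y + l /\ y < a) \/ (b < y /\ y <= b + l)) -> ext eta y.
  move=> y Hy Hc; case E: (ext eta y) => //; exfalso; apply: Hno; by exists y.
set eta' := flip eta z.
have Hl1 : 1 <= l by rewrite /l; lia.
have Hzm1 : (a <= z - 1) && ~~ ext eta (z - 1).
  rewrite Haz /=; move: HcE; rewrite /cE /ext.
  case: (eqVneq z 1) => [->|Hz1] //= H.
  by rewrite (_ : (z - 1 == 0) = false) //; apply/eqP; lia.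
have Hex : exists m, (a <= m) && ~~ ext eta m by exists (z - 1).
case: (ex_minnP Hex) => m /andP [Ham Hm] Hmin.
have Hmz : m <= z - 1 by apply: Hmin.
have Hbelow : forall th, (forall y, y < z -> ext th y = ext eta y) ->
    forall p, z <= p <= b -> Sr th l p = false.
  move=> th Hth p Hp; apply: (@m_kill th a b m) => //; last by lia.
  apply: (@m_survive th a l m) => //; last by lia.
  - by rewrite Hth //; lia.
  - move=> y Hy Hyl; rewrite Hth; last by lia.
    case: (leqP a y) => Hay.
      apply/negPn/negP => Hy0.
      have := Hmin y; rewrite Hay Hy0 => /(_ isT); lia.
    apply: NoZ; first by lia.
    by left.
have Heql : forall u, u <= L -> Sr eta l u = Sr eta' l u.
  move=> u Hu; case Ho: ((u < z) || (b < u)).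
    apply: (@diff_out eta z b l L Hzb _ l (leqnn l) u Hu Ho).
    move=> y Hy Hy2; apply: NoZ => //; right; lia.
  rewrite !Hbelow //; try lia.
  by move=> y Hy; rewrite /eta' ext_flip //; apply/eqP; lia.
have HlL : l <= L.-1 by rewrite /l; move: Hnw; case: (eqVneq a 0); case: (eqVneq b L) => //=; lia.
have Heq := eq_from Heql (L.-1 - l).
rewrite subnKC in Heq => //.
apply: HnA => y Hy; rewrite -(HA y Hy).
case: L HbL Hy Hz HlL Heq {HA Hnw NoZ Heql Hno} => [|[|n]] HbL Hy Hz HlL Heq; try lia.
rewrite !PhiAt_Sr //.
by rewrite Heq //; case/andP: Hy.
Qed.
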